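(* Let $n>5$ be prime and let $\gamma:\mathbb{Z}_n\to[0,1]$ be a probability distribution with $\gamma(k)\in\mathbb{Q}$ for all $k\in\mathbb{Z}_n$. If the random walk on $\mathbb{Z}_n$ with step distribution $\gamma$ is reconstructive, then the Fourier coefficients $\{\hat{\gamma}(x)\}_{x\in\mathbb{Z}_n}$ are pairwise distinct.
   Context: $\mathbb{Z}_n=\mathbb{Z}/n\mathbb{Z}$. The random walk $v(t)$ with step distribution $\gamma$ on a finite abelian group $H$ has $v(1)$ uniform on $H$ and $\mathbb{P}(v(t+1)-v(t)=k)=\gamma(k)$, steps independent. A labeling (scenery) is a function $f:H\to\{0,1\}$. The walk is called reconstructive if, for any two labelings $f_1,f_2$, the distributions of the sequences $\{f_1(v(t))\}_{t\ge1}$ and $\{f_2(v(t))\}_{t\ge1}$ coincide only if $f_1$ is a shift of $f_2$, i.e. there is $\ell\in H$ with $f_1(k)=f_2(k+\ell)$ for all $k$. The Fourier transform is $\hat{\gamma}(x)=\sum_{k\in\mathbb{Z}_n}\omega_n^{kx}\gamma(k)$ with $\omega_n=e^{-2\pi i/n}$. *)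

(* Defs.v *)
From HB Require Import structures.
From mathcomp Require Import all_boot all_order all_algebra.
From mathcomp Require Import all_classical all_reals.
From mathcomp Require Import trigo.
From mathcomp Require Import complex.

Set Implicit Arguments.
Unset Strict Implicit.
Unset Printing Implicit Defensive.

Import Order.TTheory GRing.Theory Num.Theory.
Local Open Scope ring_scope.

Section Walk.
Variables (R : realType) (H : finZmodType).

(* Probability of a given trajectory (v(1), ..., v(m)) of the random walk:
   v(1) uniform on H, increments v(t+1)-v(t) distributed according to gamma,
   independently. *)
Fixpoint chain_prob (gamma : H -> R) (x : H) (s : seq H) : R :=
  match s with
  | [::] => 1
  | y :: s' => gamma (y - x) * chain_prob gamma y s'
  end.

Definition path_prob (gamma : H -> R) (p : seq H) : R :=
  match p with
  | [::] => 1
  | x :: s => #|H|%:R^-1 * chain_prob gamma x s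
  end.

(* P( f(v(1)) = w_1, ..., f(v(m)) = w_m ) for a word w of length m. *)
Definition obs_prob (gamma : H -> R) (f : H -> bool) (w : seq bool) : R :=
  \sum_(p : (size w).-tuple H | map f p == w) path_prob gamma p.

(* The laws of the (infinite) observed sequences {f(v(t))}_{t>=1} coincide;
   a law on {0,1}^N is determined by its finite-dimensional marginals
   (cylinder sets), so we quantify over all finite words. *)
Definition same_scenery_law (gamma : H -> R) (f1 f2 : H -> bool) : Prop :=
  forall w : seq bool, obs_prob gamma f1 w = obs_prob gamma f2 w.

Definition is_shift (f1 f2 : H -> bool) : Prop :=
  exists l : H, forall k : H, f1 k = f2 (k + l).

Definition reconstructive (gamma : H -> R) : Prop :=
  forall f1 f2 : H -> bool, same_scenery_law gamma f1 f2 -> is_shift f1 f2.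

Definition is_prob_distr (gamma : H -> R) : Prop :=
  (forall k, 0 <= gamma k <= 1) /\ \sum_(k : H) gamma k = 1.

End Walk.

Local Open Scope complex_scope.

Definition omega (R : realType) (n : nat) : R[i] :=
  (cos (2 * pi / n%:R)) -i* (sin (2 * pi / n%:R)).

Definition fourier (R : realType) (n : nat) (gamma : 'Z_n -> R) (x : 'Z_n)
  : R[i] :=
  \sum_(k : 'Z_n) (omega R n) ^+ (k * x)%N * (gamma k)%:C.

(* Main.v *)
Require Import Defs.
From HB Require Import structures.
From mathcomp Require Import all_boot all_order all_algebra.
From mathcomp Require Import all_classical all_reals.
From mathcomp Require Import trigo.
From mathcomp Require Import complex.
From mathcomp Require Import all_field.
From mathcomp Require Import ring lra.
Import Order.TTheory GRing.Theory Num.Theory.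
Local Open Scope ring_scope.

Lemma sum_pow_root (F : idomainType) n (w : F) : w ^+ n = 1 -> w != 1 ->
  \sum_(i < n) w ^+ i = 0.
Proof.
move=> wn w1; have := subrX1 w n; rewrite wn subrr => /esym/eqP.
by rewrite mulf_eq0 subr_eq0 (negPf w1) /= => /eqP.
Qed.

Lemma key (F : numFieldType) n (w : F) (c : nat -> rat) : prime n ->
  w ^+ n = 1 -> w != 1 ->
  \sum_(i < n) ratr (c i) * w ^+ i = 0 -> forall i, (i < n)%N -> c i = c 0%N.
Proof.
move=> pn wn w1 hs.
have n_gt1 := prime_gt1 pn; have n_gt0 := prime_gt0 pn.
pose Q : {poly rat} := \poly_(i < n) 1.
have sQ : size Q = n by rewrite size_poly_eq // oner_eq0.
have Q0 : Q != 0 by rewrite -size_poly_eq0 sQ -lt0n.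
have Qm : Q \is monic.
  by rewrite monicE /lead_coef sQ coef_poly prednK // leqnn.
have evQ (K : numFieldType) (x : K) : x ^+ n = 1 -> x != 1 ->
    root (map_poly ratr Q) x.
  move=> xn x1; have szm : (size (map_poly (ratr : rat -> K) Q) <= n)%N.
    by rewrite size_map_poly size_poly.
  rewrite /root (horner_coef_wide _ szm).
  rewrite (eq_bigr (fun i : 'I_n => x ^+ i)); first by rewrite sum_pow_root.
  move=> i _; rewrite coef_map /= coef_poly ltn_ord; by rewrite rmorph1 mul1r.
have [z pz] := C_prim_root_exists n_gt0.
have [p [Dp mp] dvp] := minCpolyP z.
have szp : size p = n.
  have E := minCpoly_cyclotomic pz; rewrite Dp in E.
  have := f_equal (@polyseq _) E; move/(f_equal size); rewrite size_map_poly.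
  by rewrite size_cyclotomic totient_prime // prednK.
have z1 : z != 1.
  apply/negP => /eqP z1; have := prim_order_dvd pz 1.
  rewrite z1 expr1n eqxx dvdn1 => h.
  have n1 : n = 1%N by apply/eqP; move: h; case: (n == 1%N).
  by move: n_gt1; rewrite n1.
have pQ : p = Q.
  have pdQ : p %| Q by rewrite -dvp evQ // (prim_expr_order pz).
  by apply/eqP; rewrite -eqp_monic // -dvdp_size_eqp // szp sQ.
subst p.
pose P : {poly rat} := \poly_(i < n) c i.
have rootPw : root (map_poly ratr P) w.
  have szm : (size (map_poly (ratr : rat -> F) P) <= n)%N.
    by rewrite size_map_poly size_poly.
  rewrite /root (horner_coef_wide _ szm).
  rewrite -[X in X == _]/(\sum_(i < n) _) (eq_bigr (fun i : 'I_n => ratr (c i) * w ^+ i)).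
    by rewrite hs.
  by move=> i _; rewrite coef_map /= coef_poly ltn_ord.
have QP : Q %| P.
  pose g := gcdp P Q.
  have rg : root (map_poly ratr g) w by rewrite gcdp_map root_gcd rootPw evQ.
  have g0 : g != 0 by rewrite gcdp_eq0 negb_and Q0 orbT.
  have sg : (1 < size g)%N.
    rewrite ltnNge; apply/negP => /size1_polyC Dg.
    move: rg; rewrite Dg map_polyC /root hornerC fmorph_eq0 => /eqP g00.
    by move: g0; rewrite Dg g00 eqxx.
  have [h Dh] : exists h, Q = h * g by apply/dvdpP; exact: dvdp_gcdr.
  have h0 : h != 0 by apply: contraNneq Q0 => h0; rewrite Dh h0 mul0r.
  have : root (map_poly ratr g) z.
    have : root (map_poly ratr Q) z by rewrite evQ // (prim_expr_order pz).
    rewrite Dh rmorphM /= rootM => /orP[hz|//].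
    have : Q %| h by rewrite -dvp.
    move=> /(dvdp_leq h0).
    have -> : size Q = size (h * g) by rewrite -Dh.
    rewrite size_mul //; move: sg; case: (size g) => [|[|k]] //= _.
    by rewrite !addnS /= ltnNge leq_addr.
  rewrite dvp => Qg; exact: dvdp_trans Qg (dvdp_gcdl P Q).
have [a Da] := dvdpP _ _ QP.
have cE i : (i < n)%N -> c i = a`_0.
  move=> ilt.
  have [a00|a0] := eqVneq a 0.
    have : P`_i = 0 by rewrite Da a00 mul0r coef0.
    by rewrite coef_poly ilt => ->; rewrite a00 coef0.
  have sa : (size a <= 1)%N.
    have := size_poly n c; rewrite -/P Da size_mul // sQ.
    by case: (size a) => [|k] //=; rewrite -{2}(add0n n) leq_add2r.
  have Ea := size1_polyC sa; rewrite Ea in Da.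
  have : P`_i = ((a`_0)%:P * Q)`_i by rewrite -Da.
  by rewrite coefCM !coef_poly ilt mulr1.
by move=> i ilt; rewrite cE // cE.
Qed.

Section Om.
Local Open Scope complex_scope.
Variable R : realType.

Lemma omega_exp (n k : nat) :
  omega R n ^+ k = cos (k%:R * (2 * pi / n%:R)) -i* sin (k%:R * (2 * pi / n%:R)).
Proof.
set t := 2 * pi / n%:R.
elim: k => [|k IH]; first by rewrite expr0 !mul0r cos0 sin0 oppr0.
rewrite exprSr IH /omega -/t -natr1 mulrDl mul1r cosD sinD.
rewrite -[(_ +i* _) * (_ +i* _)]/(_ +i* _).
by congr Complex; ring.
Qed.

End Om.

Section Om2.
Variable R : realType.
Lemma omega_n (n : nat) : (0 < n)%N -> omega R n ^+ n = 1.
Proof.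
move=> n0; rewrite omega_exp mulrCA mulfV ?pnatr_eq0 -?lt0n // mulr1.
by rewrite mulr_natl cos2pi sin2pi oppr0.
Qed.

Lemma omega_neq1 (n : nat) : (2 < n)%N -> omega R n != 1.
Proof.
move=> n2; apply/negP => /eqP/(congr1 (fun z : R[i] => let: Complex _ b := z in b)) /= /eqP.
rewrite oppr_eq0; apply/negP; rewrite gt_eqF // sin_gt0_pi //.
have n0 : (0 : R) < n%:R by rewrite ltr0n; apply: leq_trans n2.
rewrite divr_gt0 ?mulr_gt0 ?pi_gt0 //=.
rewrite ltr_pdivrMr //.
by rewrite [X in _ < X]mulrC ltr_pM2r ?pi_gt0 // ltr_nat.
Qed.
End Om2.

Section FD.
Local Open Scope complex_scope.
Lemma fourier_dec (R : realType) p (q : 'Z_(p.+2) -> rat) (x : 'Z_(p.+2)) :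
  fourier (fun k => ratr (q k) : R) x =
  \sum_(j : 'Z_(p.+2)) ratr (\sum_(k | k * x == j) q k) * omega R p.+2 ^+ j.
Proof.
rewrite /fourier.
have E (k : 'Z_(p.+2)) : omega R p.+2 ^+ (k * x)%N * (ratr (q k) : R)%:C
   = omega R p.+2 ^+ (k * x)%R * ratr (q k).
  by rewrite -(@expr_mod _ p.+2 _ (k * x)%N (@omega_n R p.+2 (ltn0Sn p.+1))) fmorph_rat.
rewrite (eq_bigr _ (fun k _ => E k)).
rewrite (partition_big (fun k => k * x) predT) //=.
apply: eq_bigr => j _; rewrite rmorph_sum mulr_suml; apply: eq_bigr => k /eqP <-.
by rewrite mulrC.
Qed.

End FD.

Definition Aq p (q : 'Z_(p.+2) -> rat) (x j : 'Z_(p.+2)) := \sum_(k | k * x == j) q k.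
Arguments Aq {p}.

Lemma sum_Aq p (q : 'Z_(p.+2) -> rat) x : \sum_j Aq q x j = \sum_k q k.
Proof.
by rewrite [RHS](partition_big (fun k => k * x) predT).
Qed.

Lemma A_eq (R : realType) p (q : 'Z_(p.+2) -> rat) (x y : 'Z_(p.+2)) :
  prime p.+2 -> (2 < p.+2)%N -> \sum_k q k = 1 ->
  fourier (fun k => ratr (q k) : R) x = fourier (fun k => ratr (q k) : R) y ->
  forall j, Aq q x j = Aq q y j.
Proof.
move=> pp p2 s1; rewrite !fourier_dec => /eqP; rewrite -subr_eq0 -sumrB => /eqP h.
pose c i := Aq q x (inord i) - Aq q y (inord i).
have hs : \sum_(i < p.+2) ratr (c i) * (omega R p.+2) ^+ i = 0.
  rewrite -[RHS]h; apply: eq_bigr => j _.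
  by rewrite /c inord_val rmorphB mulrBl.
have := @key _ _ _ _ pp (@omega_n R p.+2 (ltn0Sn _)) (@omega_neq1 R p.+2 p2) hs => cE.

have c00 : c 0%N = 0.
  have : \sum_(j : 'Z_(p.+2)) c j = 0.
    rewrite /c sumrB; under eq_bigr => j _ do rewrite inord_val.
    under [X in _ - X]eq_bigr => j _ do rewrite inord_val.
    by rewrite !sum_Aq subrr.
  rewrite (eq_bigr (fun _ => c 0%N)); last by move=> j _; rewrite cE.
  rewrite sumr_const card_ord => /eqP; rewrite mulrn_eq0 /= => /eqP //.
move=> j; apply/eqP; rewrite -subr_eq0.
have := cE j (ltn_ord j); rewrite c00 /c inord_val => ->.
by [].
Qed.

Lemma Zp_natE p i : (i < p.+2)%N -> val (i%:R : 'Z_(p.+2)) = i.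
Proof. by move=> ilt; rewrite Zp_nat /= modn_small. Qed.

Lemma Zp_unit p (x : 'Z_(p.+2)) : prime p.+2 -> x != 0 -> x \is a GRing.unit.
Proof.
move=> pp x0; rewrite -(natr_Zp x) unitZpE // prime_coprime //.
rewrite gtnNdvd // lt0n; apply: contraNneq x0 => h.
by apply/eqP; apply: val_inj; rewrite /= h.
Qed.

Arguments Zp_unit {p x}.
Lemma Aq_unit p (q : 'Z_(p.+2) -> rat) x j : x \is a GRing.unit -> Aq q x j = q (j * x^-1).
Proof.
move=> xu; rewrite /Aq (big_pred1 (j * x^-1)) // => k /=.
by rewrite (can2_eq (mulrK xu) (divrK xu)).
Qed.

Lemma Aq_0 p (q : 'Z_(p.+2) -> rat) j : Aq q 0 j = if j == 0 then \sum_k q k else 0.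
Proof.
rewrite /Aq; case: eqP => [->|/eqP j0].
  by apply: eq_bigl => k; rewrite mulr0 eqxx.
by rewrite big_pred0 // => k; rewrite mulr0 eq_sym (negPf j0).
Qed.

Lemma inv_of_A p (q : 'Z_(p.+2) -> rat) (x y : 'Z_(p.+2)) :
  prime p.+2 -> (2 < p.+2)%N -> \sum_k q k = 1 -> x != y ->
  (forall j, Aq q x j = Aq q y j) ->
  exists m : 'Z_(p.+2), [/\ m \is a GRing.unit, m != 1 & forall k, q (m * k) = q k].
Proof.
move=> pp p2 s1.
wlog x0 : x y / x != 0.
  move=> IH xy hA; have [x00|x0] := eqVneq x 0; last exact: (IH x y).
  apply: (IH y x); first by rewrite -x00 eq_sym.
    by rewrite eq_sym.
  by move=> j; rewrite hA.
move=> xy hA; have xu := Zp_unit pp x0.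
have [y0|y0] := eqVneq y 0.
  have qE k : q k = (k == 0)%:R.
    have := hA (k * x); rewrite Aq_unit // y0 Aq_0 mulrK // s1.
    by rewrite (can2_eq (mulrK xu) (divrK xu)) mul0r; case: (k == 0).
  have tu : (2%:R : 'Z_(p.+2)) \is a GRing.unit.
    apply: Zp_unit pp _; apply/eqP => /(congr1 val); rewrite Zp_natE //.
  exists 2%:R; split => //.
    apply/eqP => /(congr1 val); rewrite Zp_natE //= modn_small //.
  move=> k; rewrite !qE; congr (_%:R).
  by rewrite (can2_eq (mulKr tu) (mulVKr tu)) mulr0.
have yu := Zp_unit pp y0.
exists (y * x^-1); split.
- by rewrite unitrM yu unitrV xu.
- apply: contraNneq xy => h; rewrite -[x]mul1r -h mulrAC mulrK // mul1r.
- move=> k; have := hA (k * y); rewrite !Aq_unit // mulrK // => <-.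
  by congr q; ring.
Qed.

Lemma chain_dil (R : realType) p (g : 'Z_(p.+2) -> R) (m : 'Z_(p.+2)) :
  (forall k, g (m * k) = g k) ->
  forall x s, chain_prob g (m * x) (map (fun k => m * k) s) = chain_prob g x s.
Proof.
move=> hg x s; elim: s x => [|y s IH] x //=.
by rewrite IH -mulrBr hg.
Qed.

Lemma law_dil (R : realType) p (g : 'Z_(p.+2) -> R) (m : 'Z_(p.+2)) :
  m \is a GRing.unit -> (forall k, g (m * k) = g k) ->
  forall f : 'Z_(p.+2) -> bool, same_scenery_law g (fun k => f (m * k)) f.
Proof.
move=> mu hg f w; rewrite /obs_prob.
rewrite [RHS](reindex_inj (h := fun t : (size w).-tuple 'Z_(p.+2) =>
   map_tuple (fun k => m * k) t)).
  apply: eq_big => t; first by rewrite /= -map_comp.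
  move=> _; case: t => s /= _; case: s => [|x s] //=.
  by rewrite chain_dil.
move=> t1 t2 /(congr1 val) /= /(inj_map (mulrI mu)) h.
exact: val_inj.
Qed.

Definition f01 p (k : 'Z_(p.+2)) := (k == 0) || (k == 1).
Definition f013 p (k : 'Z_(p.+2)) := [|| k == 0, k == 1 | k == 3%:R].
Arguments f01 {p}.
Arguments f013 {p}.


Lemma natZ_neq0 p i : (0 < i < p.+2)%N -> (i%:R : 'Z_(p.+2)) != 0.
Proof.
move=> /andP[i0 ilt]; apply/eqP => /(congr1 val); rewrite Zp_natE //= => h.
by move: i0; rewrite h.
Qed.

Lemma notshift1 p (m : 'Z_(p.+2)) : m \is a GRing.unit -> m != 1 -> m != -1 ->
  ~ is_shift (fun k => f01 (m * k)) (@f01 p).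
Proof.
move=> mu m1 mN1 [l hl].
have := hl 0; rewrite mulr0 add0r /f01 eqxx /= => /esym/orP[]/eqP l0.
  have := hl m^-1; rewrite /f01 mulrV // l0 addr0 eqxx orbT => /esym/orP[]/eqP h.
    by move: (oner_neq0 'Z_(p.+2)); rewrite -(mulrV mu) h mulr0 eqxx.
  by move: m1; rewrite -[m]invrK h invr1 eqxx.
have := hl (-1); rewrite /f01 l0 addNr eqxx /= mulrN1 => /orP[]/eqP h.
  by move: mu; rewrite -[m]opprK h oppr0 unitr0.
by move: mN1; rewrite -[m]opprK h eqxx.
Qed.

Lemma neq_nat p i (a b : 'Z_(p.+2)) : (0 < i)%N -> (i <= 5)%N -> (5 < p.+2)%N ->
  b - a = i%:R -> a <> b.
Proof.
move=> i0 i5 p5 e ab; move: e; rewrite ab subrr => /esym/eqP.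
by apply/negP/natZ_neq0; rewrite i0 (leq_ltn_trans i5).
Qed.

Lemma notshift2 p (m : 'Z_(p.+2)) : (5 < p.+2)%N -> m = -1 ->
  ~ is_shift (fun k => f013 (m * k)) (@f013 p).
Proof.
move=> p5 -> [l hl].
have := hl 0; rewrite mulr0 add0r /f013 eqxx /= => /esym/or3P[]/eqP l0.
- have := hl 1; rewrite /f013 l0 addr0 eqxx orbT mulr1 => /or3P[]/eqP h.
  + by apply: (@neq_nat p 1%N _ _ isT isT p5 _ h); ring.
  + by apply: (@neq_nat p 2%N _ _ isT isT p5 _ h); ring.
  + by apply: (@neq_nat p 4%N _ _ isT isT p5 _ h); ring.
- have := hl 2%:R; rewrite /f013 l0 (_ : 2%:R + 1 = 3%:R :> 'Z_(p.+2)); last by ring.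
  rewrite eqxx !orbT mulN1r => /or3P[]/eqP h.
  + by apply: (@neq_nat p 2%N _ _ isT isT p5 _ h); ring.
  + by apply: (@neq_nat p 3%N _ _ isT isT p5 _ h); ring.
  + by apply: (@neq_nat p 5%N _ _ isT isT p5 _ h); ring.
- have := hl (- 2%:R); rewrite /f013 l0 (_ : - 2%:R + 3%:R = 1 :> 'Z_(p.+2)); last by ring.
  rewrite eqxx orbT mulN1r opprK => /or3P[]/eqP h.
  + by apply: (@neq_nat p 2%N _ _ isT isT p5 _ (esym h)); ring.
  + by apply: (@neq_nat p 1%N _ _ isT isT p5 _ (esym h)); ring.
  + by apply: (@neq_nat p 1%N _ _ isT isT p5 _ h); ring.
Qed.


Theorem theorem2 (R : realType) (n : nat) (gamma : 'Z_n -> R) :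
  prime n -> (5 < n)%N ->
  is_prob_distr gamma ->
  (forall k : 'Z_n, exists q : rat, gamma k = ratr q) ->
  reconstructive gamma ->
  forall x y : 'Z_n, fourier gamma x = fourier gamma y -> x = y.
Proof.
move: gamma; case: n => [|[|p]] gamma pn //.
move=> n5 [_ hsum] hq hrec x y hf.
have [q Hq] := boolp.choice hq.
have gE : gamma = (fun k => ratr (q k)) by apply: boolp.funext.
have s1 : \sum_k q k = 1.
  apply: (fmorph_inj (ratr : {rmorphism rat -> R})).
  by rewrite rmorph_sum rmorph1 -hsum gE.
rewrite gE in hf.
have p2 : (2 < p.+2)%N by apply: leq_trans n5.
case: (eqVneq x y) => // xy; exfalso.
have hA := @A_eq R p q x y pn p2 s1 hf.
have [m [mu m1 hm]] := @inv_of_A p q x y pn p2 s1 xy hA.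
have hg : forall k, gamma (m * k) = gamma k by move=> k; rewrite !Hq hm.
have [mN1|mN1] := eqVneq m (-1).
- by apply: (@notshift2 p m n5 mN1); apply: hrec; apply: (@law_dil R p gamma m mu hg).
- by apply: (@notshift1 p m mu m1 mN1); apply: hrec; apply: (@law_dil R p gamma m mu hg).
Qed.
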